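(* Let $m,n\ge 2$. Then $(H(m),H(n),H(m,n),H(n,m))$ is a Hopf-Galois system, with structure maps $\alpha,\beta,\gamma,\delta$ all given on generators by $x^{(\alpha)}_{ij}\mapsto\sum_k x^{(\alpha)}_{ik}\otimes x^{(\alpha)}_{kj}$.
   Context: $k$ is a field. For $m,n\in\mathbb N^*$, $H(m,n)$ is the universal algebra with generators $x^{(\alpha)}_{ij}$, $1\le i\le m$, $1\le j\le n$, $\alpha\in\mathbb N$, and relations $x^{(\alpha)}\,{}^tx^{(\alpha+1)}=I_m$ and ${}^tx^{(\alpha+1)}x^{(\alpha)}=I_n$ for all $\alpha\in\mathbb N$, where $x^{(\alpha)}=(x^{(\alpha)}_{ij})$. $H(m):=H(m,m)$ is the free Hopf algebra on the matrix coalgebra $M_m(k)^*$, with $\Delta(x^{(\alpha)}_{ij})=\sum_k x^{(\alpha)}_{ik}\otimes x^{(\alpha)}_{kj}$, $\varepsilon(x^{(\alpha)}_{ij})=\delta_{ij}$, $S(x^{(\alpha)})={}^tx^{(\alpha+1)}$. A Hopf-Galois system consists of four non-zero $k$-algebras $(A,B,Z,T)$ with: (HG1) $A,B$ bialgebras; (HG2) $Z$ an $A$-$B$-bicomodule algebra with coactions $\alpha:Z\to A\otimes Z$, $\beta:Z\to Z\otimes B$; (HG3) algebra morphisms $\gamma:A\to Z\otimes T$, $\delta:B\to T\otimes Z$ with $(\gamma\otimes 1_Z)\alpha=(1_Z\otimes\delta)\beta$, $(\alpha\otimes 1_T)\gamma=(1_A\otimes\gamma)\Delta_A$, $(1_T\otimes\beta)\delta=(\delta\otimes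 1_B)\Delta_B$; (HG4) a linear map $S:T\to Z$ with $m_Z(1_Z\otimes S)\gamma=u_Z\varepsilon_A$ and $m_Z(S\otimes 1_Z)\delta=u_Z\varepsilon_B$. *)

(* Defs.v *)
From HB Require Import structures.
From mathcomp Require Import all_boot all_order all_algebra.
Set Implicit Arguments.
Unset Strict Implicit.
Unset Printing Implicit Defensive.
Import GRing.Theory.
Local Open Scope ring_scope.

Inductive term (k : fieldType) (X : Type) : Type :=
| tGen of X
| tScal of k                       (* c * 1 *)
| tAdd of term k X & term k X
| tMul of term k X & term k X.
Arguments tGen {k X}.
Arguments tScal {k X}.
Arguments tAdd {k X}.
Arguments tMul {k X}.

(* substitution of generators = the algebra map determined by generator images *)
Fixpoint subst (k : fieldType) (X Y : Type) (f : X -> term k Y) (t : term k X)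
  : term k Y :=
  match t with
  | tGen x => f x
  | tScal c => tScal c
  | tAdd s u => tAdd (subst f s) (subst f u)
  | tMul s u => tMul (subst f s) (subst f u)
  end.

Definition tmap (k : fieldType) (X Y : Type) (h : X -> Y) : term k X -> term k Y :=
  subst (fun x => tGen (h x)).

Definition sumt (k : fieldType) (X : Type) (s : seq (term k X)) : term k X :=
  foldr tAdd (tScal 0) s.

Record pres (k : fieldType) := Pres {
  gen : Type;
  rel : term k gen -> term k gen -> Prop }.
Arguments gen {k}.
Arguments rel {k}.

(* The congruence defining the universal k-algebra k<gen P>/(rel P):
   the least congruence containing the relations and the axioms of a
   unital associative k-algebra (k mapped centrally via tScal). *)
Inductive eqv (k : fieldType) (P : pres k) : term k (gen P) -> term k (gen P) -> Prop :=
| eqv_refl t : @eqv k P t t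
| eqv_sym s t : @eqv k P s t -> @eqv k P t s
| eqv_trans s t u : @eqv k P s t -> @eqv k P t u -> @eqv k P s u
| eqv_add s s' t t' : @eqv k P s s' -> @eqv k P t t' -> @eqv k P (tAdd s t) (tAdd s' t')
| eqv_mul s s' t t' : @eqv k P s s' -> @eqv k P t t' -> @eqv k P (tMul s t) (tMul s' t')
| eqv_rel s t : rel P s t -> @eqv k P s t
| eqv_addA s t u : @eqv k P (tAdd s (tAdd t u)) (tAdd (tAdd s t) u)
| eqv_addC s t : @eqv k P (tAdd s t) (tAdd t s)
| eqv_add0 t : @eqv k P (tAdd (tScal 0) t) t
| eqv_addN t : @eqv k P (tAdd t (tMul (tScal (-1)) t)) (tScal 0)
| eqv_mulA s t u : @eqv k P (tMul s (tMul t u)) (tMul (tMul s t) u)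
| eqv_mul1l t : @eqv k P (tMul (tScal 1) t) t
| eqv_mul1r t : @eqv k P (tMul t (tScal 1)) t
| eqv_mulDl s t u : @eqv k P (tMul (tAdd s t) u) (tAdd (tMul s u) (tMul t u))
| eqv_mulDr s t u : @eqv k P (tMul u (tAdd s t)) (tAdd (tMul u s) (tMul u t))
| eqv_scalD a b : @eqv k P (tScal (a + b)) (tAdd (tScal a) (tScal b))
| eqv_scalM a b : @eqv k P (tScal (a * b)) (tMul (tScal a) (tScal b))
| eqv_scalC c t : @eqv k P (tMul (tScal c) t) (tMul t (tScal c)).

Arguments eqv {k} P _ _.

(* the ground field k itself: no generators, no relations *)
Definition kpres (k : fieldType) : pres k := @Pres k Empty_set (fun _ _ => False).

(* tensor product of presented algebras:
   k<X>/(R) (x) k<Y>/(S) = k<X + Y>/(R, S, [x, y] = 0) *)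
Inductive tens_rel (k : fieldType) (P Q : pres k) :
    term k (gen P + gen Q) -> term k (gen P + gen Q) -> Prop :=
| TRl s t : rel P s t -> @tens_rel k P Q (tmap inl s) (tmap inl t)
| TRr s t : rel Q s t -> @tens_rel k P Q (tmap inr s) (tmap inr t)
| TRc (x : gen P) (y : gen Q) :
    @tens_rel k P Q (tMul (tGen (inl x)) (tGen (inr y))) (tMul (tGen (inr y)) (tGen (inl x))).

Definition tens (k : fieldType) (P Q : pres k) : pres k :=
  @Pres k (gen P + gen Q)%type (@tens_rel k P Q).

(* algebra maps are given by generator images f : gen P -> term (gen Q);
   f defines an algebra morphism P -> Q iff it respects the congruence *)
Definition is_alg_morph (k : fieldType) (P Q : pres k) (f : gen P -> term k (gen Q)) :=
  forall s t, eqv P s t -> eqv Q (subst f s) (subst f t).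

Arguments is_alg_morph {k} P Q f.

Definition eqmap (k : fieldType) (P Q : pres k) (F G : term k (gen P) -> term k (gen Q)) :=
  forall t, eqv Q (F t) (G t).

Arguments eqmap {k} P Q F G.

Definition tensor_map (k : fieldType) (X X' Y Y' : Type)
  (f : X -> term k Y) (g : X' -> term k Y') : (X + X')%type -> term k (Y + Y') :=
  fun z => match z with
           | inl x => tmap inl (f x)
           | inr x' => tmap inr (g x')
           end.

Definition idg (k : fieldType) (X : Type) : X -> term k X := fun x => tGen x.

Definition assocg (k : fieldType) (X Y W : Type) :
    ((X + Y) + W)%type -> term k (X + (Y + W)) :=
  fun z => match z with
           | inl (inl x) => tGen (inl x)
           | inl (inr y) => tGen (inr (inl y))
           | inr w => tGen (inr (inr w))
           end.

Definition lunitg (k : fieldType) (X : Type) : (Empty_set + X)%type -> term k X :=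
  fun z => match z with inl e => match e with end | inr x => tGen x end.
Definition runitg (k : fieldType) (X : Type) : (X + Empty_set)%type -> term k X :=
  fun z => match z with inl x => tGen x | inr e => match e with end end.

(* the unit map u : k -> P *)
Definition unitg (k : fieldType) (X : Type) : Empty_set -> term k X :=
  fun e => match e with end.

(* decomposition of an element of X (x) Y into a sum of pure tensors *)
Fixpoint split (k : fieldType) (X Y : Type) (t : term k (X + Y))
  : seq (term k X * term k Y) :=
  match t with
  | tGen (inl x) => [:: (tGen x, tScal 1)]
  | tGen (inr y) => [:: (tScal 1, tGen y)]
  | tScal c => [:: (tScal c, tScal 1)]
  | tAdd s u => split s ++ split u
  | tMul s u => [seq (tMul a.1 b.1, tMul a.2 b.2) | a <- split s, b <- split u]
  end.

(* the linear map X (x) Y -> W induced by a bilinear F : x (x) y |-> F x y *)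
Definition lin_tensor (k : fieldType) (X Y W : Type)
  (F : term k X -> term k Y -> term k W) (t : term k (X + Y)) : term k W :=
  sumt [seq F p.1 p.2 | p <- split t].

Definition is_linear (k : fieldType) (P Q : pres k) (S : term k (gen P) -> term k (gen Q)) :=
  [/\ forall s t, eqv P s t -> eqv Q (S s) (S t),
      forall s t, eqv Q (S (tAdd s t)) (tAdd (S s) (S t)) &
      forall c t, eqv Q (S (tMul (tScal c) t)) (tMul (tScal c) (S t))].

Arguments is_linear {k} P Q S.

Definition nonzero (k : fieldType) (P : pres k) := ~ eqv P (tScal 1) (tScal 0).

Arguments nonzero {k} P.

Definition bialgebra (k : fieldType) (A : pres k)
  (D : gen A -> term k (gen (tens A A))) (e : gen A -> term k (gen (kpres k))) :=
  [/\ is_alg_morph A (tens A A) D, is_alg_morph A (kpres k) e,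
      eqmap A (tens A (tens A A))
        (fun t => subst (@assocg k _ _ _) (subst (tensor_map D (@idg k _)) (subst D t)))
        (fun t => subst (tensor_map (@idg k _) D) (subst D t)),
      eqmap A A
        (fun t => subst (@lunitg k _) (subst (tensor_map e (@idg k _)) (subst D t)))
        (fun t => t) &
      eqmap A A
        (fun t => subst (@runitg k _) (subst (tensor_map (@idg k _) e) (subst D t)))
        (fun t => t)].

Definition HG_system (k : fieldType) (A B Z T : pres k)
  (DA : gen A -> term k (gen (tens A A))) (eA : gen A -> term k (gen (kpres k)))
  (DB : gen B -> term k (gen (tens B B))) (eB : gen B -> term k (gen (kpres k)))
  (al : gen Z -> term k (gen (tens A Z))) (be : gen Z -> term k (gen (tens Z B)))
  (ga : gen A -> term k (gen (tens Z T))) (de : gen B -> term k (gen (tens T Z))) :=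
  [/\ [/\ nonzero A, nonzero B, nonzero Z & nonzero T],
      bialgebra DA eA /\ bialgebra DB eB,
      (* HG2 : Z is an A-B-bicomodule algebra *)
      [/\ [/\ is_alg_morph Z (tens A Z) al,
              eqmap Z (tens A (tens A Z))
                (fun t => subst (@assocg k _ _ _) (subst (tensor_map DA (@idg k _)) (subst al t)))
                (fun t => subst (tensor_map (@idg k _) al) (subst al t)) &
              eqmap Z Z
                (fun t => subst (@lunitg k _) (subst (tensor_map eA (@idg k _)) (subst al t)))
                (fun t => t)],
          [/\ is_alg_morph Z (tens Z B) be,
              eqmap Z (tens Z (tens B B))
                (fun t => subst (@assocg k _ _ _) (subst (tensor_map be (@idg k _)) (subst be t)))
                (fun t => subst (tensor_map (@idg k _) DB) (subst be t)) &
              eqmap Z Z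
                (fun t => subst (@runitg k _) (subst (tensor_map (@idg k _) eB) (subst be t)))
                (fun t => t)] &
          eqmap Z (tens A (tens Z B))
            (fun t => subst (@assocg k _ _ _) (subst (tensor_map al (@idg k _)) (subst be t)))
            (fun t => subst (tensor_map (@idg k _) be) (subst al t))],
      [/\ is_alg_morph A (tens Z T) ga, is_alg_morph B (tens T Z) de,
          eqmap Z (tens Z (tens T Z))
            (fun t => subst (@assocg k _ _ _) (subst (tensor_map ga (@idg k _)) (subst al t)))
            (fun t => subst (tensor_map (@idg k _) de) (subst be t)),
          eqmap A (tens A (tens Z T))
            (fun t => subst (@assocg k _ _ _) (subst (tensor_map al (@idg k _)) (subst ga t)))
            (fun t => subst (tensor_map (@idg k _) ga) (subst DA t)) &
          eqmap B (tens T (tens Z B))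
            (fun t => subst (tensor_map (@idg k _) be) (subst de t))
            (fun t => subst (@assocg k _ _ _) (subst (tensor_map de (@idg k _)) (subst DB t)))] &
      exists S : term k (gen T) -> term k (gen Z),
        [/\ is_linear T Z S,
            eqmap A Z
              (fun t => lin_tensor (fun z u => tMul z (S u)) (subst ga t))
              (fun t => subst (@unitg k _) (subst eA t)) &
            eqmap B Z
              (fun t => lin_tensor (fun u z => tMul (S u) z) (subst de t))
              (fun t => subst (@unitg k _) (subst eB t))]].

Definition Hgen (m n : nat) := (nat * 'I_m * 'I_n)%type.

Definition kdelta (k : fieldType) (p : nat) (i j : 'I_p) : k := if i == j then 1 else 0.

(* x^(a) tx^(a+1) = I_m  and  tx^(a+1) x^(a) = I_n *)
Inductive Hrel (k : fieldType) (m n : nat) : term k (Hgen m n) -> term k (Hgen m n) -> Prop :=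
| Hrel1 (a : nat) (i j : 'I_m) :
    @Hrel k m n (sumt [seq tMul (tGen (a, i, l)) (tGen (a.+1, j, l)) | l <- enum 'I_n])
         (tScal (@kdelta k _ i j))
| Hrel2 (a : nat) (i j : 'I_n) :
    @Hrel k m n (sumt [seq tMul (tGen (a.+1, l, i)) (tGen (a, l, j)) | l <- enum 'I_m])
         (tScal (@kdelta k _ i j)).

Definition H (k : fieldType) (m n : nat) : pres k := @Pres k (Hgen m n) (@Hrel k m n).

Definition comult (k : fieldType) (p q r : nat) :
    Hgen p r -> term k (Hgen p q + Hgen q r) :=
  fun g => let: (a, i, j) := g in
    sumt [seq tMul (tGen (inl (a, i, l))) (tGen (inr (a, l, j))) | l <- enum 'I_q].

Definition Hcounit (k : fieldType) (p : nat) : Hgen p p -> term k Empty_set :=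
  fun g => let: (a, i, j) := g in tScal (@kdelta k _ i j).

(* Main.v *)
Require Import Defs.
From mathcomp Require Import all_boot all_order all_algebra.
From HB Require Import structures.
From mathcomp Require Import zify.
From mathcomp Require Import boolp.
From Stdlib Require Import ProofIrrelevance FunctionalExtensionality PropExtensionality IndefiniteDescription.
Require Import Defs.
Set Implicit Arguments. Unset Strict Implicit. Unset Printing Implicit Defensive.
Import GRing.Theory.
Local Open Scope ring_scope.

Section Quot.
Variables (k : fieldType) (P : pres k).
Local Notation T := (term k (gen P)).

Lemma eqv_eq s t : eqv P s t -> eqv P s = eqv P t.
Proof.
move=> st; apply: functional_extensionality => u; apply: propositional_extensionality.
split=> h; [exact: eqv_trans (eqv_sym st) h | exact: eqv_trans st h].
Qed.

Definition Qt := {c : T -> Prop | exists t, c = eqv P t}.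
Definition pi (t : T) : Qt := exist _ (eqv P t) (ex_intro _ t erefl).

Lemma pi_eqP s t : pi s = pi t <-> eqv P s t.
Proof.
split=> [h | h].
  have : proj1_sig (pi s) = proj1_sig (pi t) by rewrite h.
  move=> /= e; rewrite e; exact: eqv_refl.
rewrite /pi; move: (ex_intro _ s _) (ex_intro _ t _).
rewrite (eqv_eq h) => p1 p2; by rewrite (proof_irrelevance _ p1 p2).
Qed.

Definition repr (q : Qt) : T := proj1_sig (constructive_indefinite_description _ (proj2_sig q)).
Lemma reprK q : pi (repr q) = q.
Proof.
rewrite /repr; case: constructive_indefinite_description => t /= e.
case: q e => c pc /= e; subst c; rewrite /pi; congr exist; exact: proof_irrelevance.
Qed.
Lemma pi_ind (Pq : Qt -> Prop) : (forall t, Pq (pi t)) -> forall q, Pq q.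
Proof. by move=> h q; rewrite -(reprK q). Qed.
Lemma repr_pi t : eqv P (repr (pi t)) t.
Proof. by apply/pi_eqP; rewrite reprK. Qed.

HB.instance Definition _ := gen_eqMixin Qt.
HB.instance Definition _ := gen_choiceMixin Qt.

Definition qadd x y := locked (pi (tAdd (repr x) (repr y))).
Definition qmul x y := locked (pi (tMul (repr x) (repr y))).
Definition qopp x := locked (pi (tMul (tScal (-1)) (repr x))).
Definition qzero := pi (tScal 0).
Definition qone := pi (tScal 1).

Lemma qaddE s t : qadd (pi s) (pi t) = pi (tAdd s t).
Proof. rewrite /qadd -lock; apply/pi_eqP; apply: eqv_add; exact: repr_pi. Qed.
Lemma qmulE s t : qmul (pi s) (pi t) = pi (tMul s t).
Proof. rewrite /qmul -lock; apply/pi_eqP; apply: eqv_mul; exact: repr_pi. Qed.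
Lemma qoppE s : qopp (pi s) = pi (tMul (tScal (-1)) s).
Proof. rewrite /qopp -lock; apply/pi_eqP; apply: eqv_mul; [exact: eqv_refl| exact: repr_pi]. Qed.

Ltac qind := repeat (let x := fresh "x" in elim/pi_ind=> x);
  repeat rewrite ?qaddE ?qmulE ?qoppE; try apply/pi_eqP.

Lemma qaddA : associative qadd. Proof. qind; exact: eqv_addA. Qed.
Lemma qaddC : commutative qadd. Proof. qind; exact: eqv_addC. Qed.
Lemma qadd0 : left_id qzero qadd. Proof. qind; exact: eqv_add0. Qed.
Lemma qaddN : left_inverse qzero qopp qadd.
Proof. elim/pi_ind=> x. rewrite qoppE qaddE /qzero. apply/pi_eqP. exact: eqv_trans (eqv_addC _ _) (eqv_addN _). Qed.
Lemma qmulA : associative qmul. Proof. qind; exact: eqv_mulA. Qed.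
Lemma qmul1 : left_id qone qmul. Proof. qind; exact: eqv_mul1l. Qed.
Lemma qmulr1 : right_id qone qmul. Proof. qind; exact: eqv_mul1r. Qed.
Lemma qmulDl : left_distributive qmul qadd. Proof. qind; exact: eqv_mulDl. Qed.
Lemma qmulDr : right_distributive qmul qadd. Proof. qind; exact: eqv_mulDr. Qed.

HB.instance Definition _ := GRing.isPzRing.Build Qt qaddA qaddC qadd0 qaddN qmulA qmul1 qmulr1 qmulDl qmulDr.

Definition sc (c : k) : Qt := pi (tScal c).

Lemma piD s t : pi (tAdd s t) = pi s + pi t. Proof. by rewrite -qaddE. Qed.
Lemma piM s t : pi (tMul s t) = pi s * pi t. Proof. by rewrite -qmulE. Qed.
Lemma piS c : pi (tScal c) = sc c. Proof. by []. Qed.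
Lemma sc0 : sc 0 = 0. Proof. by []. Qed.
Lemma sc1 : sc 1 = 1. Proof. by []. Qed.
Lemma scD a b : sc (a + b) = sc a + sc b.
Proof. by rewrite /sc -piD; apply/pi_eqP; exact: eqv_scalD. Qed.
Lemma scM a b : sc (a * b) = sc a * sc b.
Proof. by rewrite /sc -piM; apply/pi_eqP; exact: eqv_scalM. Qed.
Lemma scC c x : sc c * x = x * sc c.
Proof. elim/pi_ind: x => x; rewrite /sc -!piM; apply/pi_eqP; exact: eqv_scalC. Qed.
Lemma piE s t : eqv P s t <-> pi s = pi t. Proof. by split=> /pi_eqP. Qed.
Lemma pi_sumt (L : seq T) : pi (sumt L) = \sum_(x <- L) pi x.
Proof. by elim: L => [|x L IH]; rewrite ?big_nil ?big_cons //= piD IH. Qed.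
End Quot.

Section NZ.
Variables (k : fieldType) (p q : nat).
Hypotheses (hp : (2 <= p)%N) (hq : (2 <= q)%N).
Local Notation L := (Hgen p q).
Local Notation word := (seq L).

Definition cc (a : nat) : nat := if odd a then q.-1 else 0.
Definition rr (a : nat) : nat := if odd a then p.-1 else 0.

Lemma cc_lt a : (cc a < q)%N.
Proof. rewrite /cc; case: odd; rewrite ?prednK; by case: q hq. Qed.
Lemma rr_lt a : (rr a < p)%N.
Proof. rewrite /rr; case: odd; by case: p hp. Qed.
Lemma cc_neq a : (cc a != cc a.+1).
Proof. rewrite /cc /=; case: odd => /=; by case: q hq => // [[]]. Qed.
Lemma rr_neq a : (rr a != rr a.+1).
Proof. rewrite /rr /=; case: odd => /=; by case: p hp => // [[]]. Qed.

Definition forb (g h : L) : bool :=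
  let: (a, i, j) := g in let: (b, i', j') := h in
  [&& b == a.+1, (j : nat) == cc a & (j' : nat) == cc a] ||
  [&& a == b.+1, (i : nat) == rr b & (i' : nat) == rr b].

Definition rule (g h : L) : k * seq (L * L) :=
  let: (a, i, j) := g in let: (b, i', j') := h in
  if b == a.+1 then
    (@kdelta k _ i i', [seq ((a, i, l), (a.+1, i', l)) | l <- enum 'I_q & nat_of_ord l != cc a])
  else
    (@kdelta k _ j j', [seq ((a, l, j), (b, l, j')) | l <- enum 'I_p & nat_of_ord l != rr b]).

Definition actv (F : L -> word -> seq (k * word)) (x : L) (v : seq (k * word)) :=
  flatten [seq [seq (z.1 * y.1, y.2) | y <- F x z.2] | z <- v].

Fixpoint actw (fu : nat) (g : L) (w : word) {struct fu} : seq (k * word) :=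
  match fu with
  | 0 => [::]
  | fu'.+1 =>
    match w with
    | [::] => [:: (1, [:: g])]
    | h :: w' =>
      if forb g h then
        ((rule g h).1, w') ::
        [seq (- z.1, z.2) | z <- flatten [seq actv (actw fu') x.1 (actw fu' x.2 w') | x <- (rule g h).2]]
      else [:: (1, g :: w)]
    end
  end.

Fixpoint normal (w : word) : bool :=
  match w with
  | [::] => true
  | g :: w' => (if w' is h :: _ then ~~ forb g h else true) && normal w'
  end.

Lemma normal_cons g w : normal (g :: w) = (if w is h :: _ then ~~ forb g h else true) && normal w.
Proof. by []. Qed.

Definition wt (g : L) : nat :=
  let: (a, i, j) := g in
  ((j : nat) == cc a) + (if a is a'.+1 then (i : nat) == rr a' else false).

Lemma wt_le g : (wt g <= 2)%N.
Proof. case: g => [[a i] j] /=; case: a => [|a]; case: eqP => _; rewrite ?addn0 ?add0n /= ?leq_b1 //; by case: eqP. Qed.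

Lemma wt_rule g h x : forb g h -> x \in (rule g h).2 -> (wt x.1).+1 = wt g.
Proof.
case: g => [[a i] j]; case: h => [[b i'] j'] /=.
case/orP=> /and3P [eb ej ej'].
  rewrite eb /= => /mapP [l]; rewrite mem_filter => /andP [lc _] -> /=.
  by rewrite (negbTE lc) (eqP ej) eqxx.
move: eb => /eqP eb; subst a.
have -> : (b == b.+2) = false by apply/eqP; lia.
move=> /mapP [l]; rewrite mem_filter => /andP [lr _] -> /=.
by rewrite (negbTE lr) ej addn0 addn1.
Qed.

Lemma mem_actv F x v y : y \in actv F x v ->
  exists2 z, z \in v & exists2 y', y' \in F x z.2 & y.2 = y'.2.
Proof.
move=> /flattenP [s /mapP [z zv ->]] /mapP [y' y'in ->].
by exists z => //; exists y'.
Qed.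

Lemma size_actw fu g w z : z \in actw fu g w -> (size z.2 <= (size w).+1)%N.
Proof.
elim: fu g w z => [|fu IH] g w z //=.
case: w => [|h w] /=; first by rewrite inE => /eqP ->.
case: ifP => _; last by rewrite inE => /eqP ->.
rewrite inE => /orP [/eqP -> /=|]; first by rewrite ltnW.
move=> /mapP [z' /flattenP [s /mapP [x _ ->]] /mem_actv [y yin [y' y'in e]]] -> /=.
rewrite e; apply: leq_trans (IH _ _ _ y'in) _.
by rewrite ltnS (leq_trans (IH _ _ _ yin)).
Qed.

Lemma normal_actw fu g w z : normal w -> z \in actw fu g w -> normal z.2.
Proof.
elim: fu g w z => [|fu IH] g w z /=; first by rewrite in_nil.
case: w => [|h w] /=; first by move=> _; rewrite inE => /eqP ->.
move=> nw; case: ifP => fb; last by rewrite inE => /eqP -> /=; rewrite fb nw.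
have nw' : normal w by case/andP: nw.
rewrite inE => /orP [/eqP -> //|].
move=> /mapP [z' /flattenP [s /mapP [x _ ->]] /mem_actv [y yin [y' y'in e]]] -> /=.
by rewrite e; apply: (IH _ _ _ _ y'in); apply: (IH _ _ _ _ yin).
Qed.

Definition B (g : L) (w : word) := (3 * size w + wt g + 1)%N.

Lemma stab fu : forall fu' g w, (B g w <= fu)%N -> (B g w <= fu')%N ->
  actw fu g w = actw fu' g w.
Proof.
elim: fu => [|fu IH] [|fu'] g w; rewrite /B ?addn1 //.
move=> h1 h2 /=; case: w h1 h2 => [|h w] h1 h2 //=.
case: ifP => fb //; congr (_ :: map _ (flatten _)).
apply/eq_in_map => x xin.
have wx := wt_rule fb xin; have wx2 := wt_le x.2; have wg := wt_le g.
move: h1 h2; rewrite /= mulnS => h1 h2.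
have e2 : actw fu x.2 w = actw fu' x.2 w by apply: IH; rewrite /B; lia.
rewrite -e2 /actv; congr flatten; apply/eq_in_map => z zin; congr map.
have sz := size_actw zin.
apply: IH; rewrite /B -addnA addn1 wx; move: sz h1 h2; set s := size _; set s2 := size w; set t := wt g; lia.
Qed.

Definition act g w := actw (3 * size w + 3) g w.

Lemma act_nf g u : (if u is h :: _ then ~~ forb g h else true) -> act g u = [:: (1, g :: u)].
Proof.
rewrite /act (_ : (3 * size u + 3) = (3 * size u + 2).+1)%N ?addnS //=.
by case: u => [|h u] //= /negbTE ->.
Qed.

Definition negv (v : seq (k * word)) := [seq (- z.1, z.2) | z <- v].

Lemma act_f g h w : forb g h -> act g (h :: w) =
  ((rule g h).1, w) :: negv (flatten [seq actv act x.1 (act x.2 w) | x <- (rule g h).2]).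
Proof.
move=> fb; rewrite /act (_ : (3 * size (h :: w) + 3) = (3 * size w + 5).+1)%N /=; last first.
  by rewrite mulnS; lia.
rewrite fb /negv; congr (_ :: map _ (flatten _)).
apply/eq_in_map => x xin.
have wx := wt_rule fb xin; have wx2 := wt_le x.2; have wg := wt_le g.
have e2 : actw (3 * size w + 5) x.2 w = act x.2 w.
  by rewrite /act; apply: stab; rewrite /B; move: wx2; set t := wt x.2; lia.
rewrite e2 /actv; congr flatten; apply/eq_in_map => z zin; congr map.
have sz := size_actw zin.
rewrite /act; apply: stab; rewrite /B; move: sz wx wg; set s := size _; set t := wt x.1;
  set t2 := wt g; lia.
Qed.


Definition E (f : word -> k) (v : seq (k * word)) : k := \sum_(z <- v) z.1 * f z.2.
Definition T (g : L) (f : word -> k) : word -> k := fun u => E f (act g u).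

Lemma E_cons f z v : E f (z :: v) = z.1 * f z.2 + E f v.
Proof. by rewrite /E big_cons. Qed.
Lemma E_cons' f c w v : E f ((c, w) :: v) = c * f w + E f v.
Proof. by rewrite /E big_cons. Qed.
Lemma E_nil f : E f [::] = 0.
Proof. by rewrite /E big_nil. Qed.
Lemma E_cat f v1 v2 : E f (v1 ++ v2) = E f v1 + E f v2.
Proof. by rewrite /E big_cat. Qed.
Lemma E_negv f v : E f (negv v) = - E f v.
Proof. rewrite /E /negv big_map -sumrN; apply: eq_bigr => z _; by rewrite mulNr. Qed.
Lemma E_flatten f V : E f (flatten V) = \sum_(v <- V) E f v.
Proof. elim: V => [|v V IH]; by rewrite ?big_nil ?big_cons /= ?E_nil // E_cat IH. Qed.
Lemma E_actv f x v : E f (actv act x v) = E (T x f) v.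
Proof.
rewrite /actv E_flatten /E big_map; apply: eq_bigr => z _.
rewrite big_map mulr_sumr; apply: eq_bigr => y _; by rewrite mulrA.
Qed.
Lemma E_sum (I : Type) (s : seq I) (F : I -> word -> k) v :
  E (fun w => \sum_(i <- s) F i w) v = \sum_(i <- s) E (F i) v.
Proof. rewrite /E exchange_big /=; apply: eq_bigr => z _; by rewrite mulr_sumr. Qed.
Lemma E_scale c f v : E (fun w => c * f w) v = c * E f v.
Proof. rewrite /E mulr_sumr; apply: eq_bigr => z _; by rewrite mulrCA. Qed.
Lemma E_add f g v : E (fun w => f w + g w) v = E f v + E g v.
Proof. by rewrite /E -big_split; apply: eq_bigr => z _; rewrite mulrDr. Qed.
Lemma E_ext f g v : (forall z, z \in v -> f z.2 = g z.2) -> E f v = E g v.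
Proof. move=> h; rewrite /E big_seq_cond [RHS]big_seq_cond; apply: eq_bigr => z /andP [zv _]; by rewrite h. Qed.

Lemma T_ext g f f' u : normal u -> (forall w, normal w -> f w = f' w) -> T g f u = T g f' u.
Proof. move=> nu h; apply: E_ext => z zin; apply: h; exact: normal_actw zin. Qed.
Lemma T_sum g (I : Type) (s : seq I) (F : I -> word -> k) u :
  T g (fun w => \sum_(i <- s) F i w) u = \sum_(i <- s) T g (F i) u.
Proof. exact: E_sum. Qed.
Lemma T_scale g c f u : T g (fun w => c * f w) u = c * T g f u.
Proof. exact: E_scale. Qed.

Lemma sum_filter_map (I J : Type) (s : seq I) (P : pred I) (f : I -> J) (G : J -> k) :
  \sum_(x <- [seq f i | i <- s & P i]) G x = \sum_(i <- s | P i) G (f i).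
Proof. by rewrite big_map big_filter. Qed.

Lemma sum_kdelta n (P : pred 'I_n) (i : 'I_n) (X : 'I_n -> k) :
  \sum_(t <- enum 'I_n | P t) @kdelta k _ i t * X t = (if P i then X i else 0).
Proof.
rewrite big_mkcond (bigD1_seq i) ?mem_enum ?enum_uniq //= big1 ?addr0.
  by rewrite /kdelta eqxx mul1r; case: (P i).
by move=> t ti; rewrite /kdelta eq_sym (negbTE ti) mul0r; case: (P t).
Qed.
Lemma sum_kdelta' n (P : pred 'I_n) (i : 'I_n) (X : 'I_n -> k) :
  \sum_(t <- enum 'I_n | P t) @kdelta k _ t i * X t = (if P i then X i else 0).
Proof. rewrite -(sum_kdelta P i X); apply: eq_bigr => t _; by rewrite /kdelta eq_sym. Qed.

Lemma neq_a2 a : (a == a.+2) = false.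
Proof. by apply/eqP; lia. Qed.

Lemma forb_R1 a (i j : 'I_p) (l l' : 'I_q) :
  forb (a, i, l) (a.+1, j, l') = (nat_of_ord l == cc a) && (nat_of_ord l' == cc a).
Proof. by rewrite /forb eqxx neq_a2 /= orbF. Qed.
Lemma rule_R1 a (i j : 'I_p) (l l' : 'I_q) :
  rule (a, i, l) (a.+1, j, l') = (@kdelta k _ i j,
    [seq ((a, i, t), (a.+1, j, t)) | t <- enum 'I_q & nat_of_ord t != cc a]).
Proof. by rewrite /rule eqxx. Qed.
Lemma forb_R2 a (i j : 'I_p) (l l' : 'I_q) :
  forb (a.+1, i, l) (a, j, l') = (nat_of_ord i == rr a) && (nat_of_ord j == rr a).
Proof. by rewrite /forb neq_a2 eqxx. Qed.
Lemma rule_R2 a (i j : 'I_p) (l l' : 'I_q) :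
  rule (a.+1, i, l) (a, j, l') = (@kdelta k _ l l',
    [seq ((a.+1, t, l), (a, t, l')) | t <- enum 'I_p & nat_of_ord t != rr a]).
Proof. by rewrite /rule neq_a2. Qed.

Lemma rule_R1_1 a (i j : 'I_p) (l l' : 'I_q) : (rule (a, i, l) (a.+1, j, l')).1 = @kdelta k _ i j.
Proof. by rewrite rule_R1. Qed.
Lemma rule_R1_2 a (i j : 'I_p) (l l' : 'I_q) : (rule (a, i, l) (a.+1, j, l')).2 =
    [seq ((a, i, t), (a.+1, j, t)) | t <- enum 'I_q & nat_of_ord t != cc a].
Proof. by rewrite rule_R1. Qed.
Lemma rule_R2_1 a (i j : 'I_p) (l l' : 'I_q) : (rule (a.+1, i, l) (a, j, l')).1 = @kdelta k _ l l'.
Proof. by rewrite rule_R2. Qed.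
Lemma rule_R2_2 a (i j : 'I_p) (l l' : 'I_q) : (rule (a.+1, i, l) (a, j, l')).2 =
    [seq ((a.+1, t, l), (a, t, l')) | t <- enum 'I_p & nat_of_ord t != rr a].
Proof. by rewrite rule_R2. Qed.

Definition l0 a : 'I_q := Ordinal (cc_lt a).
Definition r0 a : 'I_p := Ordinal (rr_lt a).


Lemma split_cancel n (r : seq 'I_n) (F : 'I_n -> k) (i0 : 'I_n) (P : pred 'I_n) (X : k) :
  uniq r -> i0 \in r -> (forall l, P l = (l != i0)) ->
  F i0 = X - \sum_(l <- r | P l) F l -> \sum_(l <- r) F l = X.
Proof.
move=> ur ir hP h; rewrite (bigD1_seq i0) //= h.
by rewrite (eq_bigl P) ?subrK.
Qed.

Lemma R1_easy a (i j : 'I_p) f u :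
  (if u is h :: _ then ~~ forb (a.+1, j, l0 a) h else true) ->
  \sum_(l <- enum 'I_q) T (a.+1, j, l) (T (a, i, l) f) u = @kdelta k _ i j * f u.
Proof.
move=> hu.
have hP : forall l : 'I_q, (nat_of_ord l != cc a) = (l != l0 a) by move=> l; rewrite -val_eqE.
apply: (split_cancel (enum_uniq _) _ hP); first by rewrite mem_enum.
rewrite [LHS]/T act_nf // E_cons E_nil mul1r addr0 [LHS]/T act_f; last by rewrite forb_R1 /= eqxx.
rewrite rule_R1_1 rule_R1_2 E_cons' E_negv E_flatten big_map sum_filter_map.
by under eq_bigr do rewrite E_actv /=.
Qed.



Lemma sum_kdelta1 n (i : 'I_n) (X : 'I_n -> k) :
  \sum_(t <- enum 'I_n) @kdelta k _ t i * X t = X i.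
Proof.
rewrite (bigD1_seq i) ?mem_enum ?enum_uniq //= big1 ?addr0 /kdelta ?eqxx ?mul1r //.
by move=> t ti; rewrite (negbTE ti) mul0r.
Qed.

Lemma R1_pre a (t : 'I_p) h : nat_of_ord t != rr a -> ~~ forb (a.+1, t, l0 a) h.
Proof.
move=> ht; case: h => [[b ih] pp]; rewrite /forb /=; apply/negP => /orP [/and3P [_ hc _]|].
  by move: (cc_neq a); rewrite hc.
by move=> /and3P [/eqP [eb] ht' _]; subst b; rewrite ht' in ht.
Qed.

Lemma R1 a (i j : 'I_p) f u : normal u ->
  \sum_(l <- enum 'I_q) T (a.+1, j, l) (T (a, i, l) f) u = @kdelta k _ i j * f u.
Proof.
case: u => [|h u'] nu; first by apply: R1_easy.
case fb: (forb (a.+1, j, l0 a) h); last by apply: R1_easy; rewrite fb.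
move: fb nu; case: h => [[b ih] pp] fb nu.
have [eb ejr eih] : [/\ b = a, nat_of_ord j = rr a & nat_of_ord ih = rr a].
  move: fb; rewrite /forb /= => /orP [/and3P [_ hc _]|/and3P [/eqP [->] /eqP -> /eqP ->]] //.
  by move: (cc_neq a); rewrite hc.
subst b.
move: nu; rewrite normal_cons => /andP [hnf nu'].

have step : forall l, T (a.+1, j, l) (T (a, i, l) f) ((a, ih, pp) :: u') =
    @kdelta k _ l pp * T (a, i, l) f u' -
    \sum_(t <- enum 'I_p | nat_of_ord t != rr a) T (a, t, pp) (T (a.+1, t, l) (T (a, i, l) f)) u'.
  move=> l; rewrite [LHS]/T act_f; last by rewrite forb_R2 ejr eih !eqxx.
  rewrite rule_R2_1 rule_R2_2 E_cons' E_negv E_flatten big_map sum_filter_map.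
  by under eq_bigr do rewrite E_actv /=.
under eq_bigr do rewrite step.
rewrite sumrB sum_kdelta1 exchange_big /=.
have e2 : forall t : 'I_p, nat_of_ord t != rr a ->
    \sum_(l <- enum 'I_q) T (a, t, pp) (T (a.+1, t, l) (T (a, i, l) f)) u' =
    @kdelta k _ i t * T (a, t, pp) f u'.
  move=> t ht; rewrite -T_sum -T_scale; apply: T_ext => // w nw.
  by apply: R1_easy; case: w nw => // h' w _; apply: R1_pre.
rewrite (eq_bigr _ e2) sum_kdelta.
have ij : (i == j) = (nat_of_ord i == rr a) by rewrite -val_eqE /= ejr.
case: ifP => hi.
  by rewrite subrr /kdelta ij (negbTE hi) mul0r.
have eii : i = ih by apply: val_inj; rewrite /= eih; apply/eqP; rewrite -(negbK (_ == _)) hi.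
subst ih; rewrite subr0 /kdelta ij (negbFE hi) mul1r /T act_nf // E_cons' E_nil mul1r addr0.
by [].
Qed.


Lemma R2_easy a (i j : 'I_q) f u :
  (if u is h :: _ then ~~ forb (a, r0 a, j) h else true) ->
  \sum_(l <- enum 'I_p) T (a, l, j) (T (a.+1, l, i) f) u = @kdelta k _ i j * f u.
Proof.
move=> hu.
have hP : forall l : 'I_p, (nat_of_ord l != rr a) = (l != r0 a) by move=> l; rewrite -val_eqE.
apply: (split_cancel (enum_uniq _) _ hP); first by rewrite mem_enum.
rewrite [LHS]/T act_nf // E_cons E_nil mul1r addr0 [LHS]/T act_f; last by rewrite forb_R2 /= eqxx.
rewrite rule_R2_1 rule_R2_2 E_cons' E_negv E_flatten big_map sum_filter_map.
by under eq_bigr do rewrite E_actv /=.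
Qed.

Lemma R2_pre a (t : 'I_q) h : nat_of_ord t != cc a -> ~~ forb (a, r0 a, t) h.
Proof.
move=> ht; case: h => [[b ih] pp]; rewrite /forb /=; apply/negP => /orP [/and3P [_ ht' _]|].
  by rewrite ht' in ht.
move=> /and3P [/eqP eb hr _]; subst a.
by move: (rr_neq b); rewrite eq_sym hr.
Qed.

Lemma R2 a (i j : 'I_q) f u : normal u ->
  \sum_(l <- enum 'I_p) T (a, l, j) (T (a.+1, l, i) f) u = @kdelta k _ i j * f u.
Proof.
case: u => [|h u'] nu; first by apply: R2_easy.
case fb: (forb (a, r0 a, j) h); last by apply: R2_easy; rewrite fb.
move: fb nu; case: h => [[b ih] pp] fb nu.
have [eb ejc epp] : [/\ b = a.+1, nat_of_ord j = cc a & nat_of_ord pp = cc a].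
  move: fb; rewrite /forb /= => /orP [/and3P [/eqP -> /eqP -> /eqP ->] //|].
  move=> /and3P [/eqP eb hr _]; subst a.
  by move: (rr_neq b); rewrite eq_sym hr.
subst b.
move: nu; rewrite normal_cons => /andP [hnf nu'].
have step : forall l, T (a, l, j) (T (a.+1, l, i) f) ((a.+1, ih, pp) :: u') =
    @kdelta k _ l ih * T (a.+1, l, i) f u' -
    \sum_(t <- enum 'I_q | nat_of_ord t != cc a) T (a.+1, ih, t) (T (a, l, t) (T (a.+1, l, i) f)) u'.
  move=> l; rewrite [LHS]/T act_f; last by rewrite forb_R1 ejc epp !eqxx.
  rewrite rule_R1_1 rule_R1_2 E_cons' E_negv E_flatten big_map sum_filter_map.
  by under eq_bigr do rewrite E_actv /=.
under eq_bigr do rewrite step.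
rewrite sumrB sum_kdelta1 exchange_big /=.
have e2 : forall t : 'I_q, nat_of_ord t != cc a ->
    \sum_(l <- enum 'I_p) T (a.+1, ih, t) (T (a, l, t) (T (a.+1, l, i) f)) u' =
    @kdelta k _ i t * T (a.+1, ih, t) f u'.
  move=> t ht; rewrite -T_sum -T_scale; apply: T_ext => // w nw.
  by apply: R2_easy; case: w nw => // h' w _; apply: R2_pre.
rewrite (eq_bigr _ e2) sum_kdelta.
have ij : (i == j) = (nat_of_ord i == cc a) by rewrite -val_eqE /= ejc.
case: ifP => hi.
  by rewrite subrr /kdelta ij (negbTE hi) mul0r.
have eii : i = pp by apply: val_inj; rewrite /= epp; apply/eqP; rewrite -(negbK (_ == _)) hi.
subst pp; rewrite subr0 /kdelta ij (negbFE hi) mul1r /T act_nf // E_cons' E_nil mul1r addr0.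
by [].
Qed.


Fixpoint I (t : term k L) (f : word -> k) {struct t} : word -> k :=
  match t with
  | tGen g => T g f
  | tScal c => fun u => c * f u
  | tAdd s t => fun u => I s f u + I t f u
  | tMul s t => I t (I s f)
  end.

Definition agree (f f' : word -> k) := forall w, normal w -> f w = f' w.

Lemma agree_trans f g h : agree f g -> agree g h -> agree f h.
Proof. by move=> h1 h2 w nw; rewrite h1 ?h2. Qed.

Lemma I_props t :
  [/\ forall f f', agree f f' -> agree (I t f) (I t f'),
      forall f f', agree (I t (fun w => f w + f' w)) (fun w => I t f w + I t f' w) &
      forall c f, agree (I t (fun w => c * f w)) (fun w => c * I t f w)].
Proof.
elim: t => [g|c|s [Rs As Ss] t [Rt At St]|s [Rs As Ss] t [Rt At St]] /=.
- split.
  + by move=> f f' h w nw; apply: T_ext.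
  + by move=> f f' w _; rewrite /T E_add.
  + by move=> c f w _; rewrite /T E_scale.
- split.
  + by move=> f f' h w nw; rewrite h.
  + by move=> f f' w _; rewrite mulrDr.
  + by move=> c' f w _; rewrite mulrCA.
- split.
  + by move=> f f' h w nw; rewrite (Rs _ _ h) ?(Rt _ _ h).
  + by move=> f f' w nw; rewrite As ?At // addrACA.
  + by move=> c f w nw; rewrite Ss ?St // mulrDr.
- split.
  + by move=> f f' h; apply: Rt; apply: Rs.
  + move=> f f'; apply: agree_trans (At _ _); exact: Rt (As _ _).
  + move=> c f; apply: agree_trans (St _ _); exact: Rt (Ss _ _).
Qed.

Lemma I_sumt (Ls : seq (term k L)) f w : I (sumt Ls) f w = \sum_(x <- Ls) I x f w + 0 * f w.
Proof. elim: Ls => [|x Ls IH] /=; first by rewrite big_nil add0r. by rewrite IH big_cons addrA. Qed.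

Lemma sound s t : eqv (H k p q) s t -> forall f, agree (I s f) (I t f).
Proof.
elim=> {s t} /=.
- by move=> t f w.
- by move=> s t _ IH f w nw; rewrite IH.
- by move=> s t u _ IH1 _ IH2 f w nw; rewrite IH1 ?IH2.
- by move=> s s' t t' _ IH1 _ IH2 f w nw; rewrite IH1 ?IH2.
- move=> s s' t t' _ IH1 _ IH2 f; apply: agree_trans (IH2 _).
  by case: (I_props t) => Rt _ _; apply: Rt; apply: IH1.
- move=> s t [a i j|a i j] f w nw /=; rewrite I_sumt mul0r addr0 big_map /=.
    exact: R1.
  exact: R2.
- by move=> s t u f w _; rewrite addrA.
- by move=> s t f w _; rewrite addrC.
- by move=> t f w _; rewrite mul0r add0r.
- move=> t f w nw; case: (I_props t) => _ _ St; rewrite St //.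
  by rewrite mulN1r subrr mul0r.
- by move=> s t u f w _.
- move=> t f; case: (I_props t) => Rt _ _; apply: Rt => w _; by rewrite mul1r.
- by move=> t f w _; rewrite mul1r.
- by move=> s t u f; case: (I_props u) => _ Au _; apply: Au.
- by move=> s t u f w _.
- by move=> a b f w _; rewrite mulrDl.
- by move=> a b f w _; rewrite mulrA [a * b]mulrC.
- by move=> c t f; case: (I_props t) => _ _ St; apply: St.
Qed.

Lemma H_nonzero : nonzero (H k p q).
Proof.
move=> e; have := sound e (fun w => if w is [::] then 1 else 0) (w := [::]) isT.
by rewrite /= !mulr1 => /eqP; rewrite oner_eq0.
Qed.

End NZ.

Section Gen.
Variable k : fieldType.

Lemma subst_comp (X Y Z : Type) (f : Y -> term k Z) (g : X -> term k Y) t :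
  subst f (subst g t) = subst (fun x => subst f (g x)) t.
Proof. by elim: t => //= [s -> u ->|s -> u ->]. Qed.

Lemma subst_id (X : Type) (t : term k X) : subst (fun x => tGen x) t = t.
Proof. by elim: t => //= [s -> u ->|s -> u ->]. Qed.

Lemma subst_eqv (X : Type) (Q : pres k) (F G : X -> term k (gen Q)) t :
  (forall x, eqv Q (F x) (G x)) -> eqv Q (subst F t) (subst G t).
Proof.
move=> h; elim: t => /= [x|c|s hs u hu|s hs u hu]; rewrite ?h //; try exact: eqv_refl.
- exact: eqv_add. - exact: eqv_mul.
Qed.

Lemma alg_morph_rel (P Q : pres k) (f : gen P -> term k (gen Q)) :
  (forall s t, rel P s t -> eqv Q (subst f s) (subst f t)) -> is_alg_morph P Q f.
Proof.
move=> hr s t; elim=> {s t}.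
- move=> t; exact: eqv_refl.
- move=> s t _ h; exact: eqv_sym h.
- move=> s t u _ h1 _ h2; exact: eqv_trans h1 h2.
- move=> s s' t t' _ h1 _ h2; exact: eqv_add h1 h2.
- move=> s s' t t' _ h1 _ h2; exact: eqv_mul h1 h2.
- move=> s t r; exact: hr.
- move=> *; exact: eqv_addA.
- move=> *; exact: eqv_addC.
- move=> *; exact: eqv_add0.
- move=> *; exact: eqv_addN.
- move=> *; exact: eqv_mulA.
- move=> *; exact: eqv_mul1l.
- move=> *; exact: eqv_mul1r.
- move=> *; exact: eqv_mulDl.
- move=> *; exact: eqv_mulDr.
- move=> *; exact: eqv_scalD.
- move=> *; exact: eqv_scalM.
- move=> *; exact: eqv_scalC.
Qed.

Lemma subst_sumt (X Y : Type) (f : X -> term k Y) (L : seq (term k X)) :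
  subst f (sumt L) = sumt (map (subst f) L).
Proof. by elim: L => //= x L ->. Qed.

Section Ev.
Variable P : pres k.
Fixpoint ev (Y : Type) (phi : Y -> Qt P) (t : term k Y) : Qt P :=
  match t with
  | tGen y => phi y
  | tScal c => sc P c
  | tAdd s u => ev phi s + ev phi u
  | tMul s u => ev phi s * ev phi u
  end.

Lemma ev_sumt (Y : Type) (phi : Y -> Qt P) L : ev phi (sumt L) = \sum_(x <- L) ev phi x.
Proof. elim: L => [|x L IH] /=; by rewrite ?big_nil ?big_cons ?IH. Qed.

Lemma ev_subst (X Y : Type) (phi : Y -> Qt P) (g : X -> term k Y) t :
  ev phi (subst g t) = ev (fun x => ev phi (g x)) t.
Proof. by elim: t => //= [s -> u ->|s -> u ->]. Qed.

Lemma pi_subst (X : Type) (f : X -> term k (gen P)) t : @pi _ P (subst f t) = ev (fun x => @pi _ P (f x)) t.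
Proof. elim: t => //= [s <- u <-|s <- u <-]; by rewrite ?piD ?piM. Qed.

Lemma ev_scal (Y : Type) (phi : Y -> Qt P) c : ev phi (tScal c) = sc P c.
Proof. by []. Qed.
End Ev.

Lemma sc_sum (P : pres k) (I : Type) (s : seq I) (F : I -> k) :
  sc P (\sum_(i <- s) F i) = \sum_(i <- s) sc P (F i).
Proof. elim: s => [|x s IH]; by rewrite ?big_nil ?big_cons ?scD ?IH. Qed.

End Gen.

Section Tens.
Variable k : fieldType.
Variables P Q : pres k.
Local Notation TT := (tens P Q).

Lemma piL_rel s t : rel P s t -> @pi _ TT (tmap inl s) = @pi _ TT (tmap inl t).
Proof. by move=> h; apply/piE; apply: eqv_rel; apply: TRl. Qed.
Lemma piR_rel s t : rel Q s t -> @pi _ TT (tmap inr s) = @pi _ TT (tmap inr t).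
Proof. by move=> h; apply/piE; apply: eqv_rel; apply: TRr. Qed.
Lemma commLR (x : gen P) (y : gen Q) :
  @pi _ TT (tGen (inl x)) * @pi _ TT (tGen (inr y)) = @pi _ TT (tGen (inr y)) * @pi _ TT (tGen (inl x)).
Proof. by rewrite -!piM; apply/piE; apply: eqv_rel; apply: TRc. Qed.
End Tens.

Section Kd.
Variables (k : fieldType) (P : pres k).
Lemma sc_kdelta n (i j : 'I_n) : sc P (@kdelta k _ i j) = if i == j then 1 else 0.
Proof. by rewrite /kdelta; case: (i == j). Qed.
Lemma sum_sc_kd n (s : 'I_n) (F : 'I_n -> Qt P) :
  \sum_(t <- enum 'I_n) F t * sc P (@kdelta k _ s t) = F s.
Proof.
rewrite (bigD1_seq s) ?mem_enum ?enum_uniq //= sc_kdelta eqxx mulr1 big1 ?addr0 // => t ts.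
by rewrite sc_kdelta eq_sym (negbTE ts) mulr0.
Qed.
Lemma sum_sc_kd' n (s : 'I_n) (F : 'I_n -> Qt P) :
  \sum_(t <- enum 'I_n) sc P (@kdelta k _ t s) * F t = F s.
Proof.
rewrite -[RHS](sum_sc_kd s); apply: eq_bigr => t _.
by rewrite scC /kdelta eq_sym.
Qed.
Lemma sum_sc_kd2 n (s : 'I_n) (F : 'I_n -> Qt P) :
  \sum_(t <- enum 'I_n) sc P (@kdelta k _ s t) * F t = F s.
Proof. rewrite -[RHS](sum_sc_kd s); apply: eq_bigr => t _; by rewrite scC. Qed.
Lemma sum_sc_kd3 n (s : 'I_n) (F : 'I_n -> Qt P) :
  \sum_(t <- enum 'I_n) F t * sc P (@kdelta k _ t s) = F s.
Proof. rewrite -[RHS](sum_sc_kd s); apply: eq_bigr => t _; by rewrite /kdelta eq_sym. Qed.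
End Kd.

Section HH.
Variables (k : fieldType) (p q r : nat).
Local Notation TT := (tens (H k p q) (H k q r)).
Local Notation X a i s := (@pi _ TT (tGen (inl (a, i, s)))).
Local Notation Y a s j := (@pi _ TT (tGen (inr (a, s, j)))).

Lemma sumX1 a (i j : 'I_p) : \sum_(s <- enum 'I_q) X a i s * X a.+1 j s = sc TT (@kdelta k _ i j).
Proof. have := @piL_rel _ (H k p q) (H k q r) _ _ (@Hrel1 k p q a i j); by rewrite !pi_subst /= ev_sumt big_map. Qed.
Lemma sumX2 a (i j : 'I_q) : \sum_(s <- enum 'I_p) X a.+1 s i * X a s j = sc TT (@kdelta k _ i j).
Proof. have := @piL_rel _ (H k p q) (H k q r) _ _ (@Hrel2 k p q a i j); by rewrite !pi_subst /= ev_sumt big_map. Qed.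
Lemma sumY1 a (i j : 'I_q) : \sum_(s <- enum 'I_r) Y a i s * Y a.+1 j s = sc TT (@kdelta k _ i j).
Proof. have := @piR_rel _ (H k p q) (H k q r) _ _ (@Hrel1 k q r a i j); by rewrite !pi_subst /= ev_sumt big_map. Qed.
Lemma sumY2 a (i j : 'I_r) : \sum_(s <- enum 'I_q) Y a.+1 s i * Y a s j = sc TT (@kdelta k _ i j).
Proof. have := @piR_rel _ (H k p q) (H k q r) _ _ (@Hrel2 k q r a i j); by rewrite !pi_subst /= ev_sumt big_map. Qed.

Lemma pi_comult (x : Hgen p r) : @pi _ TT (@comult k p q r x) =
  let: (a, i, j) := x in \sum_(s <- enum 'I_q) X a i s * Y a s j.
Proof. case: x => [[a i] j] /=; rewrite pi_sumt big_map; by under eq_bigr do rewrite piM. Qed.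

Lemma pi_cm a (i : 'I_p) (j : 'I_r) :
  @pi _ TT (sumt [seq tMul (tGen (inl (a, i, l))) (tGen (inr (a, l, j))) | l <- enum 'I_q]) =
  \sum_(s <- enum 'I_q) X a i s * Y a s j.
Proof. rewrite pi_sumt big_map; by under eq_bigr do rewrite piM. Qed.

Lemma comult_morph : is_alg_morph (H k p r) TT (@comult k p q r).
Proof.
apply: alg_morph_rel => ? ? [a i j|a i j]; apply/piE; rewrite !pi_subst /= ev_sumt big_map /=.
- under eq_bigr => l _ do rewrite !pi_cm.
  have e : forall l : 'I_r, (\sum_(s <- enum 'I_q) X a i s * Y a s l) *
      (\sum_(s <- enum 'I_q) X a.+1 j s * Y a.+1 s l) =
      \sum_(s <- enum 'I_q) \sum_(t <- enum 'I_q) (X a i s * X a.+1 j t) * (Y a s l * Y a.+1 t l).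
    move=> l; rewrite big_distrl; apply: eq_bigr => s _; rewrite big_distrr; apply: eq_bigr => t _.
    by rewrite /= !mulrA; congr (_ * _); rewrite -!mulrA; congr (_ * _); rewrite commLR.
  rewrite (eq_bigr _ (fun l _ => e l)) exchange_big.
  under eq_bigr => s _ do rewrite exchange_big.
  under eq_bigr => s _ do under eq_bigr => t _ do rewrite -big_distrr /= sumY1.
  under eq_bigr => s _ do rewrite sum_sc_kd.
  exact: sumX1.
- under eq_bigr => l _ do rewrite !pi_cm.
  have e : forall l : 'I_p, (\sum_(s <- enum 'I_q) X a.+1 l s * Y a.+1 s i) *
      (\sum_(s <- enum 'I_q) X a l s * Y a s j) =
      \sum_(s <- enum 'I_q) \sum_(t <- enum 'I_q) (X a.+1 l s * X a l t) * (Y a.+1 s i * Y a t j).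
    move=> l; rewrite big_distrl; apply: eq_bigr => s _; rewrite big_distrr; apply: eq_bigr => t _.
    by rewrite /= !mulrA; congr (_ * _); rewrite -!mulrA; congr (_ * _); rewrite commLR.
  rewrite (eq_bigr _ (fun l _ => e l)) exchange_big.
  under eq_bigr => s _ do rewrite exchange_big.
  under eq_bigr => s _ do under eq_bigr => t _ do rewrite -big_distrl /= sumX2.
  under eq_bigr => s _ do rewrite sum_sc_kd2.
  exact: sumY2.
Qed.
End HH.

Section Counit.
Variables (k : fieldType) (p : nat).
Lemma counit_morph : is_alg_morph (H k p p) (kpres k) (@Hcounit k p).
Proof.
apply: alg_morph_rel => ? ? [a i j|a i j]; apply/piE; rewrite !pi_subst /= ev_sumt big_map /=.
- rewrite (@sum_sc_kd2 _ _ _ i (fun t => sc (kpres k) (@kdelta k _ j t))).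
  by rewrite /kdelta eq_sym.
- exact: (@sum_sc_kd' _ _ _ i (fun t => sc (kpres k) (@kdelta k _ t j))).
Qed.
End Counit.

Section Coassoc.
Variables (k : fieldType) (p q r s : nat).
Local Notation TTT := (tens (H k p q) (tens (H k q r) (H k r s))).

Lemma coassoc_gen : eqmap (H k p s) TTT
  (fun t => subst (@assocg k _ _ _) (subst (tensor_map (@comult k p q r) (@idg k _)) (subst (@comult k p r s) t)))
  (fun t => subst (tensor_map (@idg k _) (@comult k q r s)) (subst (@comult k p q s) t)).
Proof.
move=> t; rewrite !subst_comp; apply: subst_eqv => [[[a i] j]]; apply/piE.
rewrite !pi_subst /= !ev_sumt !big_map /=.
under eq_bigr => u _ do rewrite /tmap subst_comp subst_sumt pi_sumt big_map big_distrl /= big_map.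
under [RHS]eq_bigr => u _ do rewrite /tmap subst_sumt pi_sumt big_map big_distrr /= big_map.
rewrite exchange_big /= !enumT; apply: eq_bigr => u _; apply: eq_bigr => v _.
by rewrite !piM mulrA.
Qed.
End Coassoc.

Section Unit.
Variables (k : fieldType) (p r : nat).
Lemma lunit_gen : eqmap (H k p r) (H k p r)
  (fun t => subst (@lunitg k _) (subst (tensor_map (@Hcounit k p) (@idg k _)) (subst (@comult k p p r) t)))
  (fun t => t).
Proof.
move=> t; rewrite !subst_comp -{2}(subst_id t); apply: subst_eqv => [[[a i] j]]; apply/piE.
rewrite !pi_subst /= !ev_sumt !big_map /= -enumT.
exact: (@sum_sc_kd2 _ _ _ i (fun t => @pi _ (H k p r) (tGen (a, t, j)))).
Qed.
Lemma runit_gen : eqmap (H k p r) (H k p r)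
  (fun t => subst (@runitg k _) (subst (tensor_map (@idg k _) (@Hcounit k r)) (subst (@comult k p r r) t)))
  (fun t => t).
Proof.
move=> t; rewrite !subst_comp -{2}(subst_id t); apply: subst_eqv => [[[a i] j]]; apply/piE.
rewrite !pi_subst /= !ev_sumt !big_map /= -enumT.
exact: (@sum_sc_kd3 _ _ _ j (fun t => @pi _ (H k p r) (tGen (a, i, t)))).
Qed.
End Unit.

Section Anti.
Variables (k : fieldType) (p q : nat).
Local Notation Z := (H k p q).

Fixpoint Santi (t : term k (Hgen q p)) : term k (Hgen p q) :=
  match t with
  | tGen g => let: (a, i, j) := g in tGen (a.+1, j, i)
  | tScal c => tScal c
  | tAdd s u => tAdd (Santi s) (Santi u)
  | tMul s u => tMul (Santi u) (Santi s)
  end.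

Lemma Santi_sumt L : Santi (sumt L) = sumt (map Santi L).
Proof. by elim: L => //= x L ->. Qed.

Lemma scN1 (P : pres k) : sc P (-1) = -1.
Proof. by apply/eqP; rewrite -addr_eq0 -sc1 -scD addNr sc0. Qed.

Lemma Santi_eqv s t : eqv (H k q p) s t -> eqv Z (Santi s) (Santi t).
Proof.
elim=> {s t} /=.
- move=> t; exact: eqv_refl.
- move=> s t _ h; exact: eqv_sym h.
- move=> s t u _ h1 _ h2; exact: eqv_trans h1 h2.
- move=> s s' t t' _ h1 _ h2; exact: eqv_add h1 h2.
- move=> s s' t t' _ h1 _ h2; exact: eqv_mul h2 h1.
- move=> s t [a i j|a i j]; rewrite Santi_sumt -map_comp.
    rewrite /comp /=; apply: eqv_trans (@eqv_rel _ (H k p q) _ _ (@Hrel2 k p q a.+1 j i)) _.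
    by rewrite /kdelta eq_sym; exact: eqv_refl.
  + rewrite /comp /=; apply: eqv_trans (@eqv_rel _ (H k p q) _ _ (@Hrel1 k p q a.+1 j i)) _.
    by rewrite /kdelta eq_sym; exact: eqv_refl.
- move=> *; exact: eqv_addA.
- move=> *; exact: eqv_addC.
- move=> *; exact: eqv_add0.
- move=> t; apply/piE; rewrite !piD !piM /= !piS scN1 mulrN1 subrr; by [].
- move=> *; exact: eqv_sym (eqv_mulA _ _ _).
- move=> *; exact: eqv_mul1r.
- move=> *; exact: eqv_mul1l.
- move=> *; exact: eqv_mulDr.
- move=> *; exact: eqv_mulDl.
- move=> *; exact: eqv_scalD.
- move=> a b; apply/piE; rewrite piM /= -scM mulrC; by [].
- move=> c t; exact: eqv_sym (eqv_scalC _ _).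
Qed.

Lemma Santi_linear : is_linear (H k q p) Z Santi.
Proof.
split.
- exact: Santi_eqv.
- move=> s t; exact: eqv_refl.
- move=> c t /=; exact: eqv_sym (eqv_scalC _ _).
Qed.
End Anti.

Section HG4.
Variables (k : fieldType) (p q : nat).
Local Notation Z := (H k p q).

Fixpoint evk (e : term k Empty_set) : k :=
  match e with
  | tGen x => match x with end
  | tScal c => c
  | tAdd s u => evk s + evk u
  | tMul s u => evk s * evk u
  end.

Lemma pi_unitg (P : pres k) e : @pi _ P (subst (@unitg k _) e) = sc P (evk e).
Proof. elim: e => [[]|c|s hs u hu|s hs u hu] //=; by rewrite ?piD ?piM ?hs ?hu ?scD ?scM. Qed.

Lemma split_sumt (X Y : Type) (L : seq (term k (X + Y))) :
  split (sumt L) = flatten (map (@split k X Y) L) ++ [:: (tScal 0, tScal 1)].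
Proof. by elim: L => //= x L ->; rewrite catA. Qed.

Lemma pi_lin (P : pres k) (X Y : Type) (F : term k X -> term k Y -> term k (gen P)) v :
  @pi _ P (lin_tensor F v) = \sum_(x <- split v) pi (F x.1 x.2).
Proof. by rewrite /lin_tensor pi_sumt big_map. Qed.

Lemma Zrel1 a (i j : 'I_p) :
  \sum_(l <- enum 'I_q) @pi _ Z (tGen (a, i, l)) * @pi _ Z (tGen (a.+1, j, l)) = sc Z (@kdelta k _ i j).
Proof.
have /piE := @eqv_rel _ Z _ _ (@Hrel1 k p q a i j).
rewrite pi_sumt big_map; by under eq_bigr do rewrite piM.
Qed.
Lemma Zrel2 a (i j : 'I_q) :
  \sum_(l <- enum 'I_p) @pi _ Z (tGen (a.+1, l, i)) * @pi _ Z (tGen (a, l, j)) = sc Z (@kdelta k _ i j).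
Proof.
have /piE := @eqv_rel _ Z _ _ (@Hrel2 k p q a i j).
rewrite pi_sumt big_map; by under eq_bigr do rewrite piM.
Qed.

Lemma HG4_gamma : eqmap (H k p p) Z
  (fun t => lin_tensor (fun z u => tMul z (Santi u)) (subst (@comult k p q p) t))
  (fun t => subst (@unitg k _) (subst (@Hcounit k p) t)).
Proof.
move=> t; apply/piE; rewrite pi_lin pi_unitg.
under eq_bigr do rewrite piM.
elim: t => [[[a i] j]|c|s hs u hu|s hs u hu] /=.
- rewrite split_sumt big_cat big_flatten big_map /= big_cons big_nil big_map.
  under eq_bigr => l _ do rewrite /= big_cons big_nil /= !piM !piS sc1 !mulr1 addr0.
  by rewrite -(Zrel1 a) /= piS sc0 mul0r !addr0.
- by rewrite big_cons big_nil /= mulr1 addr0.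
- by rewrite big_cat hs hu scD.
- rewrite big_allpairs_dep /=.
  under eq_bigr => x _ do under eq_bigr => y _ do rewrite !piM -!mulrA (mulrA (@pi _ Z y.1)).
  under eq_bigr => x _ do rewrite -big_distrr -big_distrl /= hu mulrA -scC -mulrA.
  by rewrite -big_distrr /= hs scM scC.
Qed.
Lemma HG4_delta : eqmap (H k q q) Z
  (fun t => lin_tensor (fun u z => tMul (Santi u) z) (subst (@comult k q p q) t))
  (fun t => subst (@unitg k _) (subst (@Hcounit k q) t)).
Proof.
move=> t; apply/piE; rewrite pi_lin pi_unitg.
under eq_bigr do rewrite piM.
elim: t => [[[a i] j]|c|s hs u hu|s hs u hu] /=.
- rewrite split_sumt big_cat big_flatten big_map /= big_cons big_nil big_map.
  under eq_bigr => l _ do rewrite /= big_cons big_nil /= !piM !piS sc1 !mul1r addr0.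
  by rewrite -(Zrel2 a) /= piS sc0 mul0r !addr0.
- by rewrite big_cons big_nil /= !piS sc1 mulr1 addr0.
- by rewrite big_cat hs hu scD.
- rewrite big_allpairs_dep /= exchange_big /=.
  under eq_bigr => y _ do under eq_bigr => x _ do rewrite !piM -!mulrA (mulrA (@pi _ Z (Santi x.1))).
  under eq_bigr => y _ do rewrite -big_distrr -big_distrl /= hs mulrA -scC -mulrA.
  by rewrite -big_distrr /= hu scM.
Qed.
End HG4.

Theorem proposition5p2 (k : fieldType) (m n : nat) :
  (2 <= m)%N -> (2 <= n)%N ->
  @HG_system k (H k m m) (H k n n) (H k m n) (H k n m)
    (@comult k m m m) (@Hcounit k m)
    (@comult k n n n) (@Hcounit k n)
    (@comult k m m n) (@comult k m n n)
    (@comult k m n m) (@comult k n m n).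
Proof.
move=> hm hn; split.
- by split; apply: H_nonzero.
- split; split.
  + exact: comult_morph.
  + exact: counit_morph.
  + exact: coassoc_gen.
  + exact: lunit_gen.
  + exact: runit_gen.
  + exact: comult_morph.
  + exact: counit_morph.
  + exact: coassoc_gen.
  + exact: lunit_gen.
  + exact: runit_gen.
- split; [split|split|].
  + exact: comult_morph.
  + exact: coassoc_gen.
  + exact: lunit_gen.
  + exact: comult_morph.
  + exact: coassoc_gen.
  + exact: runit_gen.
  + exact: coassoc_gen.
- split.
  + exact: comult_morph.
  + exact: comult_morph.
  + exact: coassoc_gen.
  + exact: coassoc_gen.
  + move=> t; apply: eqv_sym; exact: coassoc_gen.
- exists (@Santi k m n); split.
  + exact: Santi_linear.
  + exact: HG4_gamma.
  + exact: HG4_delta.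
Qed.
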